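(* Let $G=(V,E)$ be a finite graph with couplings $J_e>0$ and $t_e=\tanh(J_e)$. Fix $A,B\subset V$ with $|A|,|B|$ even. Let $\Omega=\{0,1\}^E$, $\Sigma=\{F\subset E\mid \partial F=A\}$, $f:\Omega\to2^\Sigma$, $f(\omega)=\{F\subset\omega\mid\partial F=A\}$, and $$\rho[\omega]\propto \mathbf{1}[\omega\in\mathcal{F}_A]\,(\ell^{A\triangle B}_t\cup\mathbb{P}_{t^2})[\omega]\ (\omega\in\Omega),\qquad\gamma[\eta]\propto1\ (\eta\in\Sigma).$$ Let $\mathscr{P}$ be the probability measure on $\Omega\times\Sigma$ with $\mathscr{P}[\omega,\eta]\propto\rho[\omega]\gamma[\eta]\mathbf{1}[\eta\in f(\omega)]$. Then: (a) The marginal of $\mathscr{P}$ on $\Sigma$ is $\ell^A_t$. For each $\omega\in\mathcal{F}_A\cap\mathcal{F}_B$, the conditional measure $\mathscr{P}[\cdot\mid\omega]$ is the uniform measure on $\{F\subset\omega\mid\partial F=A\}$. (b) The marginal of $\mathscr{P}$ on $\Omega$ is the double random current $\mathbf{P}^{A,B}_J$. For each $\eta\in\Sigma$, the conditional measure $\mathscr{P}[\cdot\mid\eta]$ is $\ell^B_t\cup\mathbb{P}_{t^2}\cup\delta_\eta$. In particular, the uniform subgraph with sources $A$ of a sample of the double random current with sources $A$ and $B$ has law $\ell^A_t$.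
   Context: Configurations $\omega\in\{0,1\}^E$ are identified with their sets of open edges. For $F\subset E$, $\partial F$ is the set of vertices of odd degree in $(V,F)$; $\mathcal{F}_A=\{\omega\subset E\mid\exists F\subset\omega,\ \partial F=A\}$. For positive weights $x=(x_e)$, $\ell^C_x[\omega]\propto\prod_{e\in\omega}x_e\,\mathbf{1}[\partial\omega=C]$ (loop $\mathrm{O}(1)$ model with sources $C$). $\mathbb{P}_{t^2}$ is Bernoulli percolation on $E$ with edge $e$ open independently with probability $t_e^2$; $\delta_\eta$ is the Dirac mass at $\eta$. For measures $\pi,\nu$ on $\{0,1\}^E$, $\pi\cup\nu$ is the law of the union of the open edges of independent samples of $\pi$ and $\nu$. The single random current $\mathbf{P}^C_J$ is the law of $\{e:n_e>0\}$ where $(n_e)$ are independent Poisson$(J_e)$ conditioned on the set of vertices $v$ with $\sum_{e\ni v}n_e$ odd being $C$; the double random current $\mathbf{P}^{A,B}_J$ is the law of the union of independent samples of $\mathbf{P}^A_J$ and $\mathbf{P}^B_J$. *)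

(* Defs.v *)
From HB Require Import structures.
From mathcomp Require Import all_boot all_order all_algebra.
From mathcomp Require Import all_classical all_reals all_analysis.
Set Implicit Arguments. Unset Strict Implicit. Unset Printing Implicit Defensive.
Import Order.TTheory GRing.Theory Num.Theory.
Local Open Scope ring_scope.

Section Defs.
Variables (R : realType) (V E : finType) (ends : E -> {set V}).

Definition tanh (x : R) : R := (expR x - expR (- x)) / (expR x + expR (- x)).

Definition deg (F : {set E}) (v : V) : nat := #|[set e in F | v \in ends e]|.
Definition bdry (F : {set E}) : {set V} := [set v | odd (deg F v)].

Definition FA (A : {set V}) (w : {set E}) : bool :=
  [exists F : {set E}, (F \subset w) && (bdry F == A)].

(* measures on Omega = {0,1}^E, identified with subsets of E *)
Definition normalize (m : {set E} -> R) : {set E} -> R :=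
  fun w => m w / \sum_(w' : {set E}) m w'.

Definition loopO (x : E -> R) (C : {set V}) : {set E} -> R :=
  normalize (fun w => (bdry w == C)%:R * \prod_(e in w) x e).

Definition bernoulli (p : E -> R) : {set E} -> R :=
  fun w => \prod_(e in w) p e * \prod_(e in ~: w) (1 - p e).

Definition pdirac (eta : {set E}) : {set E} -> R := fun w => (w == eta)%:R.

Definition munion (pi nu : {set E} -> R) : {set E} -> R :=
  fun w => \sum_(w1 : {set E}) \sum_(w2 : {set E}) ((w1 :|: w2) == w)%:R * pi w1 * nu w2.

(* single random current: independent Poisson(J_e) variables n, conditioned
   on the set of odd-degree vertices being C; law of the support of n *)
Definition cbdry (n : {ffun E -> nat}) : {set V} :=
  [set v | odd (\sum_(e | v \in ends e) n e)].
Definition csupp (n : {ffun E -> nat}) : {set E} := [set e | n e != 0%N].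
Definition poisson_w (J : E -> R) (n : {ffun E -> nat}) : R :=
  \prod_(e : E) (expR (- J e) * J e ^+ n e / (n e)`!%:R).
Definition current (J : E -> R) (C : {set V}) : {set E} -> R :=
  fun w =>
    fine (esum [set n : {ffun E -> nat} | csupp n = w /\ cbdry n = C]
              (fun n => (poisson_w J n)%:E))
  / fine (esum [set n : {ffun E -> nat} | cbdry n = C]
              (fun n => (poisson_w J n)%:E)).

Definition dcurrent (J : E -> R) (A B : {set V}) : {set E} -> R :=
  munion (current J A) (current J B).

Definition fsub (A : {set V}) (w : {set E}) : {set {set E}} :=
  [set F : {set E} | (F \subset w) && (bdry F == A)].

Definition Sigma (A : {set V}) : {set {set E}} := [set F : {set E} | bdry F == A].
Definition gamma (A : {set V}) (eta : {set E}) : R :=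
  (eta \in Sigma A)%:R / #|Sigma A|%:R.

Definition rho (t : E -> R) (A B : {set V}) : {set E} -> R :=
  normalize (fun w => (FA A w)%:R *
     munion (loopO t ((A :\: B) :|: (B :\: A))) (bernoulli (fun e => t e ^+ 2)) w).

Definition coupling (t : E -> R) (A B : {set V}) : {set E} * {set E} -> R :=
  fun p => (rho t A B p.1 * gamma A p.2 * (p.2 \in fsub A p.1)%:R) /
    \sum_(q : {set E} * {set E}) (rho t A B q.1 * gamma A q.2 * (q.2 \in fsub A q.1)%:R).

Definition margO (P : {set E} * {set E} -> R) (w : {set E}) : R :=
  \sum_(eta : {set E}) P (w, eta).
Definition margS (P : {set E} * {set E} -> R) (eta : {set E}) : R :=
  \sum_(w : {set E}) P (w, eta).
(* conditional laws P[. | omega] (on eta) and P[. | eta] (on omega) *)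
Definition condO (P : {set E} * {set E} -> R) (w : {set E}) : {set E} -> R :=
  fun eta => P (w, eta) / margO P w.
Definition condS (P : {set E} * {set E} -> R) (eta : {set E}) : {set E} -> R :=
  fun w => P (w, eta) / margS P eta.

Definition unif (S : {set {set E}}) : {set E} -> R :=
  fun eta => (eta \in S)%:R / #|S|%:R.

End Defs.

(* Main.v *)
Require Import Defs.
From HB Require Import structures.
From mathcomp Require Import all_boot all_order all_algebra.
From mathcomp Require Import all_classical all_reals all_analysis.
From mathcomp Require Import zify ring lra.
Import Order.TTheory GRing.Theory Num.Theory.
Import numFieldNormedType.Exports.
Set Implicit Arguments. Unset Strict Implicit. Unset Printing Implicit Defensive.
Local Open Scope ring_scope.
Section Comb.
Variables (R : realType) (E : finType).

Definition symd (T : finType) (X Y : {set T}) := (X :\: Y) :|: (Y :\: X).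

Lemma in_symd (T : finType) (X Y : {set T}) x : (x \in symd X Y) = (x \in X) (+) (x \in Y).
Proof. by rewrite !inE; case: (x \in X); case: (x \in Y). Qed.

Lemma symdC (T : finType) (X Y : {set T}) : symd X Y = symd Y X.
Proof. by apply/setP => x; rewrite !in_symd addbC. Qed.

Lemma symdK (T : finType) (X Y : {set T}) : symd (symd X Y) Y = X.
Proof. by apply/setP => x; rewrite !in_symd -addbA addbb addbF. Qed.

Lemma symd_inj (T : finType) (Y : {set T}) : injective (fun X => symd X Y).
Proof. by move=> X1 X2 /= h; rewrite -(symdK X1 Y) h symdK. Qed.

Lemma card_symd (T : finType) (S U : {set T}) :
  (#|symd S U| + (#|S :&: U|).*2 = #|S| + #|U|)%N.
Proof.
rewrite /symd cardsU.
have -> : (S :\: U) :&: (U :\: S) = finset.set0.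
  by apply/setP => x; rewrite !inE; case: (x \in S); case: (x \in U).
rewrite cards0 subn0 -addnn.
have h1 := cardsID U S. have h2 := cardsID S U.
rewrite finset.setIC in h2. lia.
Qed.

Lemma sumprod_sets (G : E -> bool -> R) :
  \sum_(S : {set E}) \prod_(e : E) G e (e \in S) = \prod_(e : E) (G e true + G e false).
Proof.
rewrite bigA_distr; apply: eq_bigr => S _; apply: eq_bigr => e _.
by case: (e \in S).
Qed.

Lemma eqset_prod (X Y : {set E}) :
  ((X == Y)%:R : R) = \prod_(e : E) ((e \in X) == (e \in Y))%:R.
Proof.
case: eqP => [->|ne]; first by rewrite big1 // => e _; rewrite eqxx.
have [e he] : exists e, (e \in X) != (e \in Y).
  apply/existsP; apply: contraT; rewrite negb_exists => /forallP h.
  by case: ne; apply/setP => e; apply/eqP; have := h e; rewrite negbK.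
by rewrite (bigD1 e) //= (negbTE he) mul0r.
Qed.

Lemma subset_prod (X Y : {set E}) :
  ((X \subset Y)%:R : R) = \prod_(e : E) ((e \in X) ==> (e \in Y))%:R.
Proof.
case: (boolP (X \subset Y)) => [/fintype.subsetP h|ns].
  by rewrite big1 // => e _; case: (boolP (e \in X)) => // /h ->.
have [e he] : exists e, ~~ ((e \in X) ==> (e \in Y)).
  apply/existsP; apply: contraT; rewrite negb_exists => /forallP h.
  move/negP: ns => ns; exfalso; apply: ns; apply/fintype.subsetP => x.
  by have := h x; rewrite negbK => /implyP.
by rewrite (bigD1 e) //= (negbTE he) mul0r.
Qed.

Lemma prod_in (X : {set E}) (f : E -> R) :
  \prod_(e in X) f e = \prod_(e : E) (if e \in X then f e else 1).
Proof. by rewrite big_mkcond. Qed.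

End Comb.
Section Bdry.
Variables (V E : finType) (ends : E -> {set V}).

Lemma bdry_symd (X Y : {set E}) :
  bdry ends (symd X Y) = symd (bdry ends X) (bdry ends Y).
Proof.
apply/setP => v; rewrite in_symd !inE /deg.
set Xv := [set e in X | v \in ends e]; set Yv := [set e in Y | v \in ends e].
have -> : [set e in symd X Y | v \in ends e] = symd Xv Yv.
  by apply/setP => e; rewrite !(in_symd, inE); case: (e \in X); case: (e \in Y); case: (v \in ends e).
have := congr1 odd (card_symd Xv Yv).
by rewrite oddD odd_double addbF oddD.
Qed.

Definition oddset (n : {ffun E -> nat}) : {set E} := [set e | odd (n e)].

Lemma cbdry_oddset n : cbdry ends n = bdry ends (oddset n).
Proof.
apply/setP => v; rewrite !inE /deg.
have -> : odd (\sum_(e | v \in ends e) n e) = odd (\sum_(e | v \in ends e) (odd (n e) : nat)).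
  apply: (big_ind2 (fun a b => odd a = odd b)) => //.
    by move=> a b c d h1 h2; rewrite !oddD h1 h2.
  by move=> e _; case: (odd (n e)) => /=.
rewrite (eq_bigr (fun e => if odd (n e) then 1%N else 0%N)); last by move=> e _; case: (odd (n e)).
rewrite -big_mkcondr sum1dep_card.
apply: (congr1 (fun S : {set E} => odd #|S|)); apply/setP => e; rewrite !inE andbC //.
Qed.

End Bdry.
Section Munion.
Variables (R : realType) (E : finType).

Definition mB (p : R) (wb ub : bool) : R :=
  if ub then (if wb then 1 else 0) else (if wb then p else 1 - p).

Lemma bern_prod (p : E -> R) w :
  bernoulli p w = \prod_(e : E) (if e \in w then p e else 1 - p e).
Proof.
rewrite /bernoulli !prod_in -big_split /=; apply: eq_bigr => e _.
by rewrite inE; case: (e \in w); rewrite /= ?mulr1 ?mul1r.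
Qed.

Lemma munion_bern (pi : {set E} -> R) (p : E -> R) w :
  munion pi (bernoulli p) w = \sum_(u : {set E}) pi u * \prod_(e : E) mB (p e) (e \in w) (e \in u).
Proof.
rewrite /munion; apply: eq_bigr => u _.
transitivity (\sum_(w2 : {set E}) pi u * \prod_(e : E)
   ((((e \in u) || (e \in w2)) == (e \in w))%:R * (if e \in w2 then p e else 1 - p e))).
  apply: eq_bigr => w2 _; rewrite eqset_prod bern_prod big_split /=.
  rewrite (mulrC _ (pi u)) -mulrA; congr (_ * (_ * _)); apply: eq_bigr => e _; by rewrite inE.
rewrite -big_distrr /=; congr (_ * _).
rewrite (sumprod_sets (fun e b => (((e \in u) || b) == (e \in w))%:R * (if b then p e else 1 - p e))).
apply: eq_bigr => e _; rewrite /mB.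
by case: (e \in u); case: (e \in w); rewrite /= ?mulr1n ?mulr0n ?mul1r ?mul0r ?addr0 ?add0r ?subrKC.
Qed.

Lemma munion_dirac (X : {set E} -> R) eta w :
  munion X (pdirac R eta) w = \sum_(u : {set E}) X u * ((u :|: eta) == w)%:R.
Proof.
rewrite /munion; apply: eq_bigr => u _.
rewrite (bigD1 eta) //= big1 ?addr0; first by rewrite /pdirac eqxx mulr1 mulrC.
by move=> w2 /negbTE h; rewrite /pdirac h mulr0.
Qed.

Lemma munion_mass (pi nu : {set E} -> R) :
  \sum_(w : {set E}) munion pi nu w = (\sum_(w : {set E}) pi w) * (\sum_(w : {set E}) nu w).
Proof.
rewrite /munion exchange_big /= big_distrl /=; apply: eq_bigr => w1 _.
rewrite exchange_big /= big_distrr /=; apply: eq_bigr => w2 _.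
rewrite -big_distrl /= -big_distrl /=.
rewrite (bigD1 (w1 :|: w2)) //= big1 ?addr0 ?eqxx ?mul1r //.
by move=> w /negbTE h; rewrite eq_sym h.
Qed.

Lemma bern_mass (p : E -> R) : \sum_(w : {set E}) bernoulli p w = 1.
Proof.
under eq_bigr => w _ do rewrite bern_prod.
rewrite (sumprod_sets (fun e b => if b then p e else 1 - p e)).
by rewrite big1 // => e _; rewrite subrKC.
Qed.

Lemma dirac_mass (eta : {set E}) : \sum_(w : {set E}) pdirac R eta w = 1.
Proof.
rewrite (bigD1 eta) //= big1 ?addr0 /pdirac ?eqxx //.
by move=> w /negbTE ->.
Qed.

Lemma normalize_mass (m : {set E} -> R) :
  \sum_(w : {set E}) m w != 0 -> \sum_(w : {set E}) normalize m w = 1.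
Proof. by move=> h; rewrite /normalize -big_distrl /= divff. Qed.

End Munion.
Section Esum.
Variables (R : realType) (E : finType).
Local Notation T := {ffun E -> nat}.
Local Open Scope classical_set_scope.

Definition liftf N (y : {ffun E -> 'I_N}) : T := [ffun e => nat_of_ord (y e)].

Lemma liftf_inj N : injective (@liftf N).
Proof.
move=> y1 y2 h; apply/ffunP => e; apply/val_inj.
by have := congr1 (fun g : T => g e) h; rewrite /liftf !ffunE.
Qed.

Lemma trunc_sum (P : pred T) (f : T -> R) N :
  \sum_(x \in (@liftf N) @` [set y | P (liftf y)]) (f x)%:E =
  (\sum_(y : {ffun E -> 'I_N} | P (liftf y)) f (liftf y))%:E.
Proof.
rewrite fsbig_image; last by move=> y1 y2 _ _; apply: liftf_inj.
have -> : [set y | P (liftf y)] = [set` (fun y : {ffun E -> 'I_N} => P (liftf y))] by [].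
rewrite -(@bigfs _ _ _ _ (index_enum _)) ?sumEFin //; first exact: index_enum_uniq.
by move=> i _; rewrite mem_index_enum.
Qed.


Lemma esum_trunc (P : pred T) (f : T -> R) (l : R) :
  (forall n, 0 <= f n) ->
  (fun N : nat => \sum_(y : {ffun E -> 'I_N} | P (liftf y)) f (liftf y) : R) @ \oo --> l ->
  esum [set n | P n] (fun n => (f n)%:E) = l%:E.
Proof.
move=> f0 hcvg.
set a := fun N => _ in hcvg.
have aE N : (a N)%:E = \sum_(x \in (@liftf N) @` [set y | P (liftf y)]) (f x)%:E.
  by rewrite trunc_sum.
have limE : lim (a @ \oo) = l by apply: cvg_lim.
have cvga : cvg (a @ \oo) by apply/cvg_ex; exists l.
have hB : (esum [set n | P n] (fun n => (f n)%:E) <= l%:E)%E.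
  apply: ge_ereal_sup => _ [X [finX XS] <-].
  rewrite fsumEFin // lee_fin.
  rewrite -limE; apply: limr_ge => //.
  pose N0 := (\max_(x <- finmap.enum_fset (fset_set X)) \max_(e : E) x e).+1.
  exists N0 => // M /= hM.
  rewrite -lee_fin -fsumEFin // aE.
  apply: lee_fsum_nneg_subset => //.
  - exact: finite_image finite_finset.
  - move=> x; rewrite !in_setE => Xx.
    have hx e : (x e < M)%N.
      apply: leq_trans hM; rewrite ltnS.
      apply: (@leq_trans (\max_(e : E) x e)); first exact: (leq_bigmax e).
      apply: (@leq_bigmax_seq _ _ xpredT (fun x : T => \max_(e : E) x e) x) => //.
      by rewrite in_fset_set // in_setE.
    exists [ffun e => Ordinal (hx e)]; last first.
      by apply/ffunP => e; rewrite /liftf !ffunE.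
    rewrite /=.
    have -> : liftf [ffun e => Ordinal (hx e)] = x.
      by apply/ffunP => e; rewrite /liftf !ffunE.
    exact: XS.
  - by move=> t _; rewrite lee_fin f0.
have fin : esum [set n | P n] (fun n => (f n)%:E) \is a fin_num.
  by rewrite ge0_fin_numE ?esum_ge0 // ?(le_lt_trans hB) ?ltry // => n _; rewrite lee_fin.
apply/le_anti; rewrite hB /=; rewrite -(fineK fin) lee_fin.
rewrite -limE; apply: limr_le => //.
exists 0%N => // M _ /=.
rewrite -lee_fin (fineK fin) aE; apply: esum_ge.
exists ((@liftf M) @` [set y | P (liftf y)]) => //.
split; first exact: finite_image finite_finset.
by move=> x [y Py <-].
Qed.

End Esum.
Section Cvg.
Variables (R : realType).
Local Open Scope classical_set_scope.

Lemma cvg_sum_seq (I : Type) (r : seq I) (u : I -> nat -> R) (l : I -> R) :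
  (forall i, (u i) @ \oo --> l i) ->
  (fun N : nat => \sum_(i <- r) u i N : R) @ \oo --> \sum_(i <- r) l i.
Proof.
move=> h; elim: r => [|i r IH].
  rewrite big_nil; under eq_cvg do rewrite big_nil; exact: cvg_cst.
rewrite big_cons; under eq_cvg do rewrite big_cons.
exact: cvgD.
Qed.

Lemma cvg_prod_seq (I : Type) (r : seq I) (u : I -> nat -> R) (l : I -> R) :
  (forall i, (u i) @ \oo --> l i) ->
  (fun N : nat => \prod_(i <- r) u i N : R) @ \oo --> \prod_(i <- r) l i.
Proof.
move=> h; elim: r => [|i r IH].
  rewrite big_nil; under eq_cvg do rewrite big_nil; exact: cvg_cst.
rewrite big_cons; under eq_cvg do rewrite big_cons.
exact: cvgM.
Qed.

End Cvg.

Section EsumProd.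
Variables (R : realType) (E : finType).
Local Notation T := {ffun E -> nat}.
Local Open Scope classical_set_scope.

Lemma esum_prod_formula (P : pred T) (Phi : {set E} -> E -> nat -> bool)
  (c : {set E} -> R) (wt : E -> nat -> R) (L : {set E} -> E -> R) :
  (forall n, (P n)%:R = \sum_(u : {set E}) c u * \prod_(e : E) (Phi u e (n e))%:R) ->
  (forall e k, 0 <= wt e k) ->
  (forall u e, (fun N : nat => \sum_(k < N) (Phi u e k)%:R * wt e k : R) @ \oo --> L u e) ->
  esum [set n | P n] (fun n => (\prod_(e : E) wt e (n e))%:E) =
  (\sum_(u : {set E}) c u * \prod_(e : E) L u e)%:E.
Proof.
move=> hP wt0 hL.
apply: (esum_trunc (f := fun n : T => \prod_(e : E) wt e (n e))).
  by move=> n; apply: prodr_ge0 => e _.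
have -> : (fun N : nat => \sum_(y : {ffun E -> 'I_N} | P (liftf y))
              \prod_(e : E) wt e (liftf y e)) =
          (fun N : nat => \sum_(u : {set E}) c u * \prod_(e : E) \sum_(k < N) (Phi u e k)%:R * wt e k).
  apply: funext => N.
  rewrite big_mkcond /=.
  transitivity (\sum_(y : {ffun E -> 'I_N}) \sum_(u : {set E}) c u *
     \prod_(e : E) ((Phi u e (y e))%:R * wt e (y e))).
    apply: eq_bigr => y _.
    have -> : (if P (liftf y) then \prod_(e : E) wt e (liftf y e) else 0) =
              (P (liftf y))%:R * \prod_(e : E) wt e (liftf y e).
      by case: (P (liftf y)); rewrite ?mul1r ?mul0r.
    rewrite hP big_distrl /=; apply: eq_bigr => u _.
    rewrite -mulrA big_split /=; congr (_ * (_ * _)).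
      by apply: eq_bigr => e _; rewrite /liftf ffunE.
    by apply: eq_bigr => e _; rewrite /liftf ffunE.
  rewrite exchange_big /=; apply: eq_bigr => u _.
  rewrite -big_distrr /=; congr (_ * _).
  by rewrite bigA_distr_bigA.
apply: cvg_sum_seq => u.
apply: cvgMr.  
exact: cvg_prod_seq.
Qed.

End EsumProd.
Section Series.
Variables (R : realType).
Local Open Scope classical_set_scope.

Lemma exp_series_cvg (x : R) : (fun N : nat => \sum_(k < N) (x ^+ k / k`!%:R) : R) @ \oo --> expR x.
Proof.
have h := is_cvg_series_exp_coeff x.
have e : (fun N : nat => \sum_(k < N) (x ^+ k / k`!%:R) : R) = series (exp_coeff x).
  by apply: funext => N; rewrite /series /= big_mkord.
by rewrite e; exact: h.
Qed.

Lemma indic0_cvg : (fun N : nat => \sum_(k < N) ((nat_of_ord k == 0%N) : nat)%:R : R) @ \oo --> (1 : R).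
Proof.
apply: cvg_near_cst; exists 1%N => // N /= hN.
case: N hN => // N _; rewrite big_ord_recl /= big1 ?addr0 //.
Qed.

Lemma negpow (J : R) k : (- J) ^+ k / k`!%:R = (if odd k then -1 else 1) * (J ^+ k / k`!%:R).
Proof.
rewrite exprNn -signr_odd mulrA; by case: (odd k); rewrite ?expr1 ?expr0.
Qed.

Lemma series_edge (J : R) (phi : nat -> bool) (a b c : R) :
  (forall k : nat, (phi k)%:R = a + b * (if odd k then -1 else 1) + c * ((k == 0%N) : nat)%:R) ->
  (fun N : nat => \sum_(k < N) (phi k)%:R * (expR (- J) * J ^+ k / k`!%:R) : R) @ \oo -->
     expR (- J) * (a * expR J + b * expR (- J) + c).
Proof.
move=> h0.
have h : forall k : nat, (phi k)%:R * (expR (- J) * J ^+ k / k`!%:R) =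
     expR (- J) * (a * (J ^+ k / k`!%:R) + b * ((- J) ^+ k / k`!%:R) + c * ((k == 0%N) : nat)%:R).
  move=> k; rewrite h0 negpow.
  case: k => [|k]; rewrite ?expr0 /= ?mul1r ?mulr1; first by rewrite !mulr1n !divr1; ring.
  rewrite !mulr0n; field.
  by rewrite pnatr_eq0 -lt0n fact_gt0.
have -> : (fun N : nat => \sum_(k < N) (phi k)%:R * (expR (- J) * J ^+ k / k`!%:R) : R) =
  (fun N : nat => expR (- J) * (a * \sum_(k < N) (J ^+ k / k`!%:R) + b * \sum_(k < N) ((- J) ^+ k / k`!%:R)
     + c * \sum_(k < N) ((nat_of_ord k == 0%N) : nat)%:R)).
  apply: funext => N; under eq_bigr => k _ do rewrite h.
  rewrite -big_distrr /=; congr (_ * _).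
  by rewrite !big_distrr -!big_split /=.
apply: cvgMr.
have h1 : (fun N : nat => a * \sum_(k < N) (J ^+ k / k`!%:R) : R) @ \oo --> a * expR J.
  by apply: cvgMr; exact: exp_series_cvg.
have h2 : (fun N : nat => b * \sum_(k < N) ((- J) ^+ k / k`!%:R) : R) @ \oo --> b * expR (- J).
  by apply: cvgMr; exact: exp_series_cvg.
have h3 : (fun N : nat => c * \sum_(k < N) ((nat_of_ord k == 0%N) : nat)%:R : R) @ \oo --> c * 1.
  by apply: cvgMr; exact: indic0_cvg.
rewrite mulr1 in h3.
have HH := cvgD (cvgD h1 h2) h3.
exact: (HH _ _).
Qed.

Definition hcur (J : R) (wb ub : bool) : R :=
  expR (- J) * (if wb then (if ub then (expR J - expR (- J)) / 2 else (expR J + expR (- J)) / 2 - 1)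
                else (if ub then 0 else 1)).
Definition gcur (J : R) (ub : bool) : R :=
  expR (- J) * (if ub then (expR J - expR (- J)) / 2 else (expR J + expR (- J)) / 2).

Lemma edge_cur (J : R) (wb ub : bool) :
  (fun N : nat => \sum_(k < N) ((((nat_of_ord k != 0%N) == wb) && (odd k == ub)) : nat)%:R *
       (expR (- J) * J ^+ k / k`!%:R) : R) @ \oo --> hcur J wb ub.
Proof.
have gen := series_edge (phi := fun k : nat => ((k != 0%N) == wb) && (odd k == ub)) (J := J).
case: wb gen; case: ub => gen.
- have -> : hcur J true true = expR (- J) * (1 / 2 * expR J + (- (1 / 2)) * expR (- J) + 0).
    by rewrite /hcur; field.
  apply: gen => k.
  case: k => [|k] /=; first by rewrite ?mulr0n ?mulr1n; lra.
  by case: (odd k) => /=; rewrite ?mulr0n ?mulr1n; lra.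
- have -> : hcur J true false = expR (- J) * (1 / 2 * expR J + 1 / 2 * expR (- J) + (-1)).
    by rewrite /hcur; field.
  apply: gen => k.
  case: k => [|k] /=; first by rewrite ?mulr0n ?mulr1n; lra.
  by case: (odd k) => /=; rewrite ?mulr0n ?mulr1n; lra.
- have -> : hcur J false true = expR (- J) * (0 * expR J + 0 * expR (- J) + 0).
    by rewrite /hcur; field.
  apply: gen => k.
  case: k => [|k] /=; first by rewrite ?mulr0n ?mulr1n; lra.
  by case: (odd k) => /=; rewrite ?mulr0n ?mulr1n; lra.
- have -> : hcur J false false = expR (- J) * (0 * expR J + 0 * expR (- J) + 1).
    by rewrite /hcur; field.
  apply: gen => k.
  case: k => [|k] /=; first by rewrite ?mulr0n ?mulr1n; lra.
  by case: (odd k) => /=; rewrite ?mulr0n ?mulr1n; lra.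
Qed.

Lemma edge_bd (J : R) (ub : bool) :
  (fun N : nat => \sum_(k < N) ((odd k == ub) : nat)%:R *
       (expR (- J) * J ^+ k / k`!%:R) : R) @ \oo --> gcur J ub.
Proof.
have gen := series_edge (phi := fun k : nat => (odd k == ub)) (J := J).
case: ub gen => gen.
- have -> : gcur J true = expR (- J) * (1 / 2 * expR J + (- (1 / 2)) * expR (- J) + 0).
    by rewrite /gcur; field.
  apply: gen => k.
  case: k => [|k] /=; first by rewrite ?mulr0n ?mulr1n; lra.
  by case: (odd k) => /=; rewrite ?mulr0n ?mulr1n; lra.
- have -> : gcur J false = expR (- J) * (1 / 2 * expR J + 1 / 2 * expR (- J) + 0).
    by rewrite /gcur; field.
  apply: gen => k.
  case: k => [|k] /=; first by rewrite ?mulr0n ?mulr1n; lra.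
  by case: (odd k) => /=; rewrite ?mulr0n ?mulr1n; lra.
Qed.

End Series.
Section Current.
Variables (R : realType) (V E : finType) (ends : E -> {set V}) (J : E -> R).
Hypothesis Jpos : forall e, 0 < J e.

Lemma natr_andb (b1 b2 : bool) : ((b1 && b2 : nat)%:R : R) = (b1 : nat)%:R * (b2 : nat)%:R.
Proof. by case: b1; case: b2; rewrite /= ?mulr1n ?mulr0n ?mul1r ?mul0r. Qed.

Lemma indic_cur (n : {ffun E -> nat}) w C :
  ((((csupp n == w) && (cbdry ends n == C)) : nat)%:R : R) =
  \sum_(u : {set E}) (bdry ends u == C)%:R *
     \prod_(e : E) (((n e != 0%N) == (e \in w)) && (odd (n e) == (e \in u)) : nat)%:R.
Proof.
transitivity (\sum_(u : {set E}) (bdry ends u == C)%:R *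
   (((csupp n == w) : nat)%:R * ((oddset n == u) : nat)%:R) : R).
  rewrite (bigD1 (oddset n)) //= big1 ?addr0; last first.
    by move=> u /negbTE hu; rewrite [oddset n == u]eq_sym hu mulr0n !mulr0.
  by rewrite eqxx mulr1n mulr1 cbdry_oddset natr_andb mulrC.
apply: eq_bigr => u _; congr (_ * _).
rewrite !eqset_prod -big_split /=; apply: eq_bigr => e _.
by rewrite natr_andb !inE.
Qed.

Lemma indic_bd (n : {ffun E -> nat}) C :
  (((cbdry ends n == C) : nat)%:R : R) =
  \sum_(u : {set E}) (bdry ends u == C)%:R *
     \prod_(e : E) ((odd (n e) == (e \in u)) : nat)%:R.
Proof.
transitivity (\sum_(u : {set E}) (bdry ends u == C)%:R * ((oddset n == u) : nat)%:R : R).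
  rewrite (bigD1 (oddset n)) //= big1 ?addr0; last first.
    by move=> u /negbTE hu; rewrite [oddset n == u]eq_sym hu mulr0n !mulr0.
  by rewrite eqxx mulr1n mulr1 cbdry_oddset.
apply: eq_bigr => u _; congr (_ * _).
rewrite !eqset_prod; apply: eq_bigr => e _.
by rewrite !inE.
Qed.

Local Open Scope classical_set_scope.

Lemma wt_ge0 e k : 0 <= expR (- J e) * J e ^+ k / k`!%:R.
Proof.
apply: divr_ge0; last by rewrite ler0n.
by apply: mulr_ge0; [apply: expR_ge0 | apply: exprn_ge0; apply: ltW].
Qed.

Lemma current_num w C :
  fine (esum [set n : {ffun E -> nat} | csupp n = w /\ cbdry ends n = C]
          (fun n => (poisson_w J n)%:E)) =
  \sum_(u : {set E}) (bdry ends u == C)%:R * \prod_(e : E) hcur (J e) (e \in w) (e \in u).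
Proof.
have -> : [set n : {ffun E -> nat} | csupp n = w /\ cbdry ends n = C] =
          [set n | (csupp n == w) && (cbdry ends n == C)].
  apply/seteqP; split => n /=; first by case=> -> ->; rewrite !eqxx.
  by case/andP => /eqP -> /eqP ->.
have := esum_prod_formula (P := fun n => (csupp n == w) && (cbdry ends n == C))
  (Phi := fun u e k => ((k != 0%N) == (e \in w)) && (odd k == (e \in u)))
  (c := fun u => (bdry ends u == C)%:R)
  (wt := fun e k => expR (- J e) * J e ^+ k / k`!%:R)
  (L := fun u e => hcur (J e) (e \in w) (e \in u)).
rewrite /poisson_w => -> //.
- by move=> n; rewrite indic_cur.
- exact: wt_ge0.
- by move=> u e; exact: edge_cur.
Qed.

Lemma current_den C :
  fine (esum [set n : {ffun E -> nat} | cbdry ends n = C]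
          (fun n => (poisson_w J n)%:E)) =
  \sum_(u : {set E}) (bdry ends u == C)%:R * \prod_(e : E) gcur (J e) (e \in u).
Proof.
have -> : [set n : {ffun E -> nat} | cbdry ends n = C] =
          [set n | (cbdry ends n == C)].
  apply/seteqP; split => n /=; first by move=> ->; rewrite !eqxx.
  by move/eqP.
have := esum_prod_formula (P := fun n => (cbdry ends n == C))
  (Phi := fun u e k => (odd k == (e \in u)))
  (c := fun u => (bdry ends u == C)%:R)
  (wt := fun e k => expR (- J e) * J e ^+ k / k`!%:R)
  (L := fun u e => gcur (J e) (e \in u)).
rewrite /poisson_w => -> //.
- by move=> n; rewrite indic_bd.
- exact: wt_ge0.
- by move=> u e; exact: edge_bd.
Qed.

End Current.
Section Loops.
Variables (R : realType) (V E : finType) (ends : E -> {set V}) (x : E -> R).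
Hypothesis hx0 : forall e, 0 < x e.
Hypothesis hx1 : forall e, x e < 1.
Variables (A B : {set V}).

Local Notation bd := (bdry ends).
Local Notation D := (symd A B).
Local Notation Bern := (bernoulli (fun e => x e ^+ 2)).

Definition mm (y : R) (wb ub : bool) : R := (if ub then y else 1) * mB (y ^+ 2) wb ub.
Definition LL (C : {set V}) (w : {set E}) : R := (bd w == C)%:R * \prod_(e in w) x e.
Definition ZL (C : {set V}) : R := \sum_(w : {set E}) LL C w.
Definition NSC (C : {set V}) (w : {set E}) : R :=
  \sum_(u : {set E}) (bd u == C)%:R * \prod_(e : E) mm (x e) (e \in w) (e \in u).

Lemma munion_loop C w :
  munion (loopO ends x C) Bern w = NSC C w / ZL C.
Proof.
rewrite munion_bern /loopO /normalize /NSC big_distrl /=; apply: eq_bigr => u _.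
rewrite /mm big_split /= -prod_in /ZL /LL.
by rewrite !mulrA [LHS]mulrAC.
Qed.

Lemma reindexD (eta : {set E}) (F : {set E} -> R) : bd eta = A ->
  \sum_(u : {set E}) (bd u == D)%:R * F u =
  \sum_(u2 : {set E}) (bd u2 == B)%:R * F (symd u2 eta).
Proof.
move=> he; rewrite (reindex_inj (@symd_inj _ eta)) /=; apply: eq_bigr => u _.
rewrite bdry_symd he [symd A B]symdC.
have -> : (symd (bd u) A == symd B A) = (bd u == B).
  by apply/eqP/eqP => [/symd_inj|->].
by [].
Qed.

Definition Seta (eta w : {set E}) : R :=
  \sum_(u2 : {set E}) (bd u2 == B)%:R *
    \prod_(e : E) (((e \in eta) ==> (e \in w))%:R * mm (x e) (e \in w) ((e \in u2) (+) (e \in eta))).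

Lemma K2 (eta w : {set E}) : bd eta = A -> (eta \subset w)%:R * NSC D w = Seta eta w.
Proof.
move=> he; rewrite /NSC (reindexD _ he) big_distrr /=; apply: eq_bigr => u2 _.
rewrite mulrCA; congr (_ * _); rewrite subset_prod -big_split /=.
by apply: eq_bigr => e _; rewrite in_symd.
Qed.

Lemma K1 (eta : {set E}) : bd eta = A ->
  \sum_(w : {set E}) (eta \subset w)%:R * NSC D w = (\prod_(e in eta) x e) * ZL B.
Proof.
move=> he; rewrite (eq_bigr (fun w => Seta eta w)); last by move=> w _; exact: K2.
rewrite /Seta exchange_big /= /ZL big_distrr /=; apply: eq_bigr => u2 _.
rewrite -big_distrr /= mulrCA; congr (_ * _).
rewrite (sumprod_sets (fun e b => (((e \in eta) ==> b)%:R * mm (x e) b ((e \in u2) (+) (e \in eta))))).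
rewrite !prod_in -big_split /=; apply: eq_bigr => e _.
rewrite /mm /mB; case: (e \in eta); case: (e \in u2); rewrite /= ?mulr1n ?mulr0n; ring.
Qed.

Definition MO (w : {set E}) : R :=
  \sum_(u1 : {set E}) (bd u1 == A)%:R * Seta u1 w.

Lemma card_fsub (w : {set E}) :
  (#|fsub ends A w|%:R : R) = \sum_(u1 : {set E}) ((u1 \in fsub ends A w) : nat)%:R.
Proof.
rewrite -sumr_const big_mkcond /=; apply: eq_bigr => u1 _.
by case: (u1 \in fsub ends A w).
Qed.

Lemma K3 (w : {set E}) : #|fsub ends A w|%:R * NSC D w = MO w.
Proof.
rewrite card_fsub big_distrl /=; apply: eq_bigr => u1 _.
rewrite inE; case: (boolP (bd u1 == A)) => [/eqP h|h].
  by rewrite -(K2 _ h) andbT mul1r.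
by rewrite andbF !mul0r.
Qed.

Lemma K4 (eta w : {set E}) :
  munion (munion (loopO ends x B) Bern) (pdirac R eta) w =
  (\prod_(e : E) (if e \in eta then (x e)^-1 else 1)) / ZL B * Seta eta w.
Proof.
rewrite munion_dirac.
rewrite (eq_bigr (fun w' => NSC B w' / ZL B * (((w' :|: eta) == w) : nat)%:R)); last by move=> w' _; rewrite munion_loop.
rewrite /Seta /NSC.
transitivity ((ZL B)^-1 * \sum_(u : {set E}) (bd u == B)%:R * \sum_(w' : {set E})
   \prod_(e : E) (mm (x e) (e \in w') (e \in u) * ((((e \in w') || (e \in eta)) == (e \in w)) : nat)%:R)).
  transitivity ((ZL B)^-1 * \sum_(w' : {set E}) \sum_(u : {set E}) (bd u == B)%:R *
     (\prod_(e : E) mm (x e) (e \in w') (e \in u) * (((w' :|: eta) == w) : nat)%:R)).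
    rewrite big_distrr /=; apply: eq_bigr => w' _.
    rewrite !big_distrl big_distrr /=; apply: eq_bigr => u _; ring.
  rewrite exchange_big /=; congr (_ * _); apply: eq_bigr => u _; rewrite -big_distrr /=.
  congr (_ * _); apply: eq_bigr => w' _; rewrite eqset_prod -big_split /=.
  by apply: eq_bigr => e _; rewrite inE.
suff -> : \sum_(u : {set E}) (bd u == B)%:R * \sum_(w' : {set E})
   \prod_(e : E) (mm (x e) (e \in w') (e \in u) * ((((e \in w') || (e \in eta)) == (e \in w)) : nat)%:R) =
  (\prod_(e : E) (if e \in eta then (x e)^-1 else 1)) *
  \sum_(u2 : {set E}) (bd u2 == B)%:R *
    \prod_(e : E) (((e \in eta) ==> (e \in w))%:R * mm (x e) (e \in w) ((e \in u2) (+) (e \in eta))).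
  by ring.
rewrite big_distrr /=; apply: eq_bigr => u _.
rewrite mulrCA; congr (_ * _).
rewrite (sumprod_sets (fun e b => mm (x e) b (e \in u) * ((((b || (e \in eta)) == (e \in w))) : nat)%:R)).
rewrite -big_split /=; apply: eq_bigr => e _.
have hx := hx0 e; have hxn : x e != 0 by rewrite gt_eqF.
rewrite /mm /mB; case: (e \in eta); case: (e \in u); case: (e \in w);
  rewrite /= ?mulr1n ?mulr0n; field; try done.
Qed.

End Loops.
Section Facts.
Variable R : realType.

Lemma expR_lt (J : R) : 0 < J -> expR (- J) < expR J.
Proof. by move=> h; rewrite ltr_expR; lra. Qed.

Lemma tanh_gt0 (J : R) : 0 < J -> 0 < tanh J.
Proof.
move=> h; have := expR_lt h; have := expR_gt0 J; have := expR_gt0 (- J) => h1 h2 h3.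
by rewrite /tanh divr_gt0 // ?subr_gt0 // addr_gt0.
Qed.

Lemma tanh_lt1 (J : R) : 0 < J -> tanh J < 1.
Proof.
move=> h; have := expR_lt h; have := expR_gt0 J; have := expR_gt0 (- J) => h1 h2 h3.
rewrite /tanh ltr_pdivrMr ?addr_gt0 // mul1r; lra.
Qed.

Definition kap (J : R) : R := (expR (- J) * ((expR J + expR (- J)) / 2)) ^+ 2.

Lemma dcur_edge (J : R) (w a1 a2 : bool) :
  (((true || true) == w) : nat)%:R * hcur J true a1 * hcur J true a2 +
  (((true || false) == w) : nat)%:R * hcur J true a1 * hcur J false a2 +
  ((((false || true) == w) : nat)%:R * hcur J false a1 * hcur J true a2 +
   (((false || false) == w) : nat)%:R * hcur J false a1 * hcur J false a2) =
  kap J * ((a1 ==> w)%:R * mm (tanh J) w (a2 (+) a1)).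
Proof.
have hy := expR_gt0 J.
rewrite /kap /hcur /mm /mB /tanh !expRN.
have hy0 : expR J != 0 by rewrite gt_eqF.
have hs : expR J + (expR J)^-1 != 0 by rewrite gt_eqF // addr_gt0 // invr_gt0.
have hyy : 0 < expR J * expR J + 1 by apply: addr_gt0 => //; apply: mulr_gt0.
move: hy0 hs hyy; set y := expR J => hy0 hs hyy.
case: w; case: a1; case: a2; rewrite /= ?mulr1n ?mulr0n; field; by rewrite hy0 gt_eqF.
Qed.

Lemma hcur_sum (J : R) (a : bool) : hcur J true a + hcur J false a = gcur J a.
Proof. by rewrite /hcur /gcur; case: a; ring. Qed.

Lemma gcur_gt0 (J : R) (a : bool) : 0 < J -> 0 < gcur J a.
Proof.
move=> h; have := expR_lt h; have := expR_gt0 J; have := expR_gt0 (- J) => h1 h2 h3.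
rewrite /gcur; apply: mulr_gt0 => //; case: a; apply: divr_gt0; lra.
Qed.

Lemma sum_pos (I : finType) (F : I -> R) (i0 : I) :
  (forall i, 0 <= F i) -> 0 < F i0 -> 0 < \sum_(i : I) F i.
Proof.
move=> h0 h1; rewrite (bigD1 i0) //=; apply: (lt_le_trans h1).
by rewrite lerDl; apply: sumr_ge0 => i _.
Qed.

Lemma norm_eq (I : finType) (p q M : I -> R) (a b : R) :
  (forall i, p i = a * M i) -> (forall i, q i = b * M i) ->
  \sum_(i : I) p i = 1 -> \sum_(i : I) q i = 1 -> forall i, p i = q i.
Proof.
move=> hp hq sp sq i.
have ep : a * \sum_(i : I) M i = 1 by rewrite big_distrr /= -sp; apply: eq_bigr => j _; rewrite hp.
have eq : b * \sum_(i : I) M i = 1 by rewrite big_distrr /= -sq; apply: eq_bigr => j _; rewrite hq.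
have hM : \sum_(i : I) M i != 0.
  by apply/eqP => h; move: ep; rewrite h mulr0 => /eqP; rewrite eq_sym oner_eq0.
have hab : a = b by apply: (mulIf hM); rewrite ep eq.
by rewrite hp hq hab.
Qed.

Lemma mm_ge0 (x : R) w u : 0 < x -> x < 1 -> 0 <= mm x w u.
Proof.
move=> h0 h1; have hx2 : x ^+ 2 < 1 by rewrite expr2; nra.
rewrite /mm /mB; case: u; case: w => /=; rewrite ?mulr1 ?mulr0 ?mul1r //; try lra.
by apply: exprn_ge0; lra.
Qed.

Lemma mm_gt0 (x : R) w u : 0 < x -> x < 1 -> (u ==> w) -> 0 < mm x w u.
Proof.
move=> h0 h1; have hx2 : x ^+ 2 < 1 by rewrite expr2; nra.
rewrite /mm /mB; case: u; case: w => //= _; rewrite ?mulr1 ?mul1r //; try lra.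
by apply: exprn_gt0.
Qed.

End Facts.
Section Main.
Variables (R : realType) (V E : finType) (ends : E -> {set V}) (J : E -> R).
Hypothesis Jpos : forall e, 0 < J e.
Variables (A B : {set V}).
Hypothesis Asol : exists F : {set E}, bdry ends F = A.
Hypothesis Bsol : exists F : {set E}, bdry ends F = B.

Local Notation t := (fun e => tanh (J e)).
Local Notation P := (coupling ends (fun e => tanh (J e)) A B).
Local Notation D := (symd A B).
Local Notation Bern := (bernoulli (fun e => tanh (J e) ^+ 2)).

Lemma ht0 e : 0 < t e. Proof. exact: tanh_gt0. Qed.
Lemma ht1 e : t e < 1. Proof. exact: tanh_lt1. Qed.

Lemma ZL_gt0 C : (exists F, bdry ends F = C) -> 0 < ZL ends t C.
Proof.
case=> F hF; apply: (sum_pos (i0 := F)) => [w|]; rewrite /LL.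
  by apply: mulr_ge0; [rewrite ler0n | apply: prodr_ge0 => e _; apply: ltW; apply: ht0].
by rewrite hF eqxx mul1r; apply: prodr_gt0 => e _; apply: ht0.
Qed.

Lemma NSC_ge0 C w : 0 <= NSC ends t C w.
Proof.
apply: sumr_ge0 => u _; apply: mulr_ge0; first by rewrite ler0n.
by apply: prodr_ge0 => e _; apply: mm_ge0; [apply: ht0 | apply: ht1].
Qed.

Lemma NSC_gt0 w : FA ends A w -> FA ends B w -> 0 < NSC ends t D w.
Proof.
case/existsP => F1 /andP [s1 /eqP b1]; case/existsP => F2 /andP [s2 /eqP b2].
apply: (sum_pos (i0 := symd F1 F2)) => [u|].
  by apply: mulr_ge0; [rewrite ler0n | apply: prodr_ge0 => e _; apply: mm_ge0; [apply: ht0 | apply: ht1]].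
rewrite bdry_symd b1 b2 eqxx mul1r; apply: prodr_gt0 => e _.
apply: mm_gt0; [apply: ht0 | apply: ht1 |].
rewrite in_symd; apply/implyP.
by case: (boolP (e \in F1)) => h1 /=; [move=> _; exact: (fintype.subsetP s1) | move=> h2; exact: (fintype.subsetP s2)].
Qed.

Lemma FA_full C : (exists F, bdry ends F = C) -> FA ends C [set: E]%SET.
Proof. by case=> F hF; apply/existsP; exists F; rewrite finset.subsetT hF eqxx. Qed.

Definition Zrho : R := \sum_(w : {set E}) (FA ends A w)%:R * (NSC ends t D w / ZL ends t D).

Lemma rhoE w : rho ends t A B w = (FA ends A w)%:R * (NSC ends t D w / ZL ends t D) / Zrho.
Proof.
rewrite /rho /normalize /Zrho munion_loop; congr (_ / _).
by apply: eq_bigr => w' _; rewrite munion_loop.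
Qed.

Lemma ZLD_gt0 : 0 < ZL ends t D.
Proof.
case: Asol => F1 h1; case: Bsol => F2 h2; apply: ZL_gt0.
by exists (symd F1 F2); rewrite bdry_symd h1 h2.
Qed.

Lemma Zrho_gt0 : 0 < Zrho.
Proof.
apply: (sum_pos (i0 := [set: E]%SET)) => [w|].
  by apply: mulr_ge0; [rewrite ler0n | apply: divr_ge0; [apply: NSC_ge0 | apply: ltW; apply: ZLD_gt0]].
rewrite FA_full // mul1r; apply: divr_gt0; last exact: ZLD_gt0.
by apply: NSC_gt0; apply: FA_full.
Qed.

Lemma Sigma_gt0 : 0 < (#|Sigma ends A|%:R : R).
Proof.
case: Asol => F hF; rewrite ltr0n; apply/card_gt0P; exists F.
by rewrite inE hF.
Qed.

Definition K0 : R := (ZL ends t D)^-1 * Zrho^-1 * (#|Sigma ends A|%:R)^-1.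

Lemma K0_gt0 : 0 < K0.
Proof.
by rewrite /K0; apply: mulr_gt0; [apply: mulr_gt0|]; rewrite invr_gt0;
  [exact: ZLD_gt0 | exact: Zrho_gt0 | exact: Sigma_gt0].
Qed.

Lemma fsub_FA eta w : eta \in fsub ends A w -> FA ends A w.
Proof. by rewrite inE => h; apply/existsP; exists eta. Qed.

Lemma num_eq w eta :
  rho ends t A B w * gamma R ends A eta * (eta \in fsub ends A w)%:R =
  K0 * NSC ends t D w * (eta \in fsub ends A w)%:R.
Proof.
case: (boolP (eta \in fsub ends A w)) => h; last by rewrite !mulr0.
have hS : eta \in Sigma ends A by move: h; rewrite !inE => /andP [].
rewrite rhoE (fsub_FA h) /gamma hS /K0 /=; ring.
Qed.

Definition Zc : R := \sum_(q : {set E} * {set E})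
  (rho ends t A B q.1 * gamma R ends A q.2 * (q.2 \in fsub ends A q.1)%:R).

Lemma Zc_gt0 : 0 < Zc.
Proof.
case: Asol => F hF.
apply: (sum_pos (i0 := ([set: E]%SET, F))) => [q|]; rewrite num_eq.
  apply: mulr_ge0; last by rewrite ler0n.
  by apply: mulr_ge0; [apply: ltW; apply: K0_gt0 | apply: NSC_ge0].
have hin : F \in fsub ends A [set: E]%SET by rewrite inE finset.subsetT hF eqxx.
rewrite /= hin mulr1; apply: mulr_gt0; first exact: K0_gt0.
by apply: NSC_gt0; apply: FA_full.
Qed.

Definition Kc : R := K0 / Zc.

Lemma Kc_gt0 : 0 < Kc.
Proof. by apply: divr_gt0; [exact: K0_gt0 | exact: Zc_gt0]. Qed.

Lemma PE w eta : P (w, eta) = Kc * NSC ends t D w * (eta \in fsub ends A w)%:R.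
Proof.
rewrite /coupling /= num_eq -/Zc /Kc; ring.
Qed.

Lemma P_mass : \sum_(q : {set E} * {set E}) P q = 1.
Proof.
by rewrite /coupling -big_distrl /= -/Zc mulfV // gt_eqF // Zc_gt0.
Qed.


Lemma margS_eq eta : margS P eta = (Kc * ZL ends t B) * LL ends t A eta.
Proof.
rewrite /margS.
rewrite (eq_bigr (fun w => Kc * NSC ends t D w * (eta \in fsub ends A w)%:R)); last first.
  by move=> w _; rewrite PE.
case: (boolP (bdry ends eta == A)) => [/eqP hA | hA].
  transitivity (Kc * \sum_(w : {set E}) (eta \subset w)%:R * NSC ends t D w).
    rewrite big_distrr /=; apply: eq_bigr => w _; rewrite inE hA eqxx andbT; ring.
  by rewrite (K1 t B hA) /LL hA eqxx mul1r; ring.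
rewrite big1 /LL ?(negbTE hA) ?mul0r ?mulr0 //.
by move=> w _; rewrite inE (negbTE hA) andbF mulr0.
Qed.

Lemma sumS : \sum_(eta : {set E}) margS P eta = 1.
Proof.
rewrite /margS exchange_big /= pair_big /= -P_mass.
by apply: eq_bigr => -[w e].
Qed.

Lemma sumO : \sum_(w : {set E}) margO P w = 1.
Proof.
rewrite /margO pair_big /= -P_mass.
by apply: eq_bigr => -[w e].
Qed.

Lemma loopOE C eta : loopO ends t C eta = (ZL ends t C)^-1 * LL ends t C eta.
Proof. by rewrite /loopO /normalize /ZL /LL mulrC. Qed.

Lemma ZL_neq0 C : (exists F, bdry ends F = C) -> ZL ends t C != 0.
Proof. by move=> h; rewrite gt_eqF // ZL_gt0. Qed.

Lemma loop_mass C : (exists F, bdry ends F = C) -> \sum_(w : {set E}) loopO ends t C w = 1.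
Proof. by move=> h; apply: normalize_mass; apply: ZL_neq0. Qed.

Lemma F1 eta : margS P eta = loopO ends t A eta.
Proof.
apply: (@norm_eq _ _ (margS P) (loopO ends t A) (LL ends t A) (Kc * ZL ends t B) (ZL ends t A)^-1).
- exact: margS_eq.
- by move=> i; rewrite loopOE.
- exact: sumS.
- exact: loop_mass.
Qed.

Lemma margO_card w : margO P w = Kc * NSC ends t D w * #|fsub ends A w|%:R.
Proof.
rewrite /margO card_fsub big_distrr /=; apply: eq_bigr => eta _; by rewrite PE.
Qed.

Lemma F2 w : FA ends A w -> FA ends B w ->
  forall eta, condO P w eta = unif R (fsub ends A w) eta.
Proof.
move=> hA hB eta.
have hK : Kc != 0 by rewrite gt_eqF // Kc_gt0.
have hN : NSC ends t D w != 0 by rewrite gt_eqF // NSC_gt0.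
have hc : (#|fsub ends A w|%:R : R) != 0.
  case/existsP: hA => F hF; rewrite pnatr_eq0 -lt0n; apply/card_gt0P; exists F.
  by rewrite inE.
rewrite /condO margO_card PE /unif; field.
by rewrite hK hN hc.
Qed.

Definition HC (C : {set V}) (w : {set E}) : R := \sum_(u : {set E}) (bdry ends u == C)%:R *
  \prod_(e : E) hcur (J e) (e \in w) (e \in u).
Definition GC (C : {set V}) : R := \sum_(u : {set E}) (bdry ends u == C)%:R * \prod_(e : E) gcur (J e) (e \in u).

Lemma currentE C w : current ends J C w = HC C w / GC C.
Proof. by rewrite /current current_num // current_den. Qed.

Lemma GC_gt0 C : (exists F, bdry ends F = C) -> 0 < GC C.
Proof.
case=> F hF; apply: (sum_pos (i0 := F)) => [u|].
  by apply: mulr_ge0; [rewrite ler0n | apply: prodr_ge0 => e _; apply: ltW; apply: gcur_gt0].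
by rewrite hF eqxx mul1r; apply: prodr_gt0 => e _; apply: gcur_gt0.
Qed.

Lemma HC_mass C : \sum_(w : {set E}) HC C w = GC C.
Proof.
rewrite /HC exchange_big /=; apply: eq_bigr => u _.
rewrite -big_distrr /=; congr (_ * _).
rewrite (sumprod_sets (fun e b => hcur (J e) b (e \in u))).
by apply: eq_bigr => e _; rewrite hcur_sum.
Qed.

Lemma current_mass C : (exists F, bdry ends F = C) -> \sum_(w : {set E}) current ends J C w = 1.
Proof.
move=> h; under eq_bigr => w _ do rewrite currentE.
by rewrite -big_distrl /= HC_mass mulfV // gt_eqF // GC_gt0.
Qed.


Definition Gd (w u1 u2 : {set E}) (e : E) (b1 b2 : bool) : R :=
  (((b1 || b2) == (e \in w)) : nat)%:R * hcur (J e) b1 (e \in u1) * hcur (J e) b2 (e \in u2).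

Lemma dcur_expand w :
  \sum_(w1 : {set E}) \sum_(w2 : {set E}) ((w1 :|: w2 == w) : nat)%:R * HC A w1 * HC B w2 =
  \sum_(u1 : {set E}) (bdry ends u1 == A)%:R * \sum_(u2 : {set E}) (bdry ends u2 == B)%:R *
     \sum_(w1 : {set E}) \sum_(w2 : {set E}) \prod_(e : E) Gd w u1 u2 e (e \in w1) (e \in w2).
Proof.
transitivity (\sum_(w1 : {set E}) \sum_(w2 : {set E}) \sum_(u1 : {set E}) \sum_(u2 : {set E})
   (bdry ends u1 == A)%:R * ((bdry ends u2 == B)%:R * \prod_(e : E) Gd w u1 u2 e (e \in w1) (e \in w2))).
  apply: eq_bigr => w1 _; apply: eq_bigr => w2 _.
  rewrite -mulrA /HC big_distrl /= big_distrr /=; apply: eq_bigr => u1 _.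
  rewrite big_distrr /= big_distrr /=; apply: eq_bigr => u2 _.
  rewrite /Gd eqset_prod !big_split /=.
  have -> : \prod_(e : E) ((e \in w1 :|: w2) == (e \in w) : nat)%:R =
            \prod_(e : E) ((((e \in w1) || (e \in w2)) == (e \in w)) : nat)%:R :> R.
    by apply: eq_bigr => e _; rewrite inE.
  ring.
transitivity (\sum_(u1 : {set E}) \sum_(u2 : {set E}) \sum_(w1 : {set E}) \sum_(w2 : {set E})
   (bdry ends u1 == A)%:R * ((bdry ends u2 == B)%:R * \prod_(e : E) Gd w u1 u2 e (e \in w1) (e \in w2))).
  transitivity (\sum_(w1 : {set E}) \sum_(u1 : {set E}) \sum_(u2 : {set E}) \sum_(w2 : {set E})
   (bdry ends u1 == A)%:R * ((bdry ends u2 == B)%:R * \prod_(e : E) Gd w u1 u2 e (e \in w1) (e \in w2))).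
    apply: eq_bigr => w1 _; rewrite exchange_big /=; apply: eq_bigr => u1 _.
    by rewrite exchange_big.
  rewrite exchange_big /=; apply: eq_bigr => u1 _.
  by rewrite exchange_big.
apply: eq_bigr => u1 _; rewrite big_distrr /=; apply: eq_bigr => u2 _.
rewrite big_distrr /= big_distrr /=; apply: eq_bigr => w1 _.
rewrite big_distrr /= big_distrr /=; apply: eq_bigr => w2 _.
by [].
Qed.

Lemma dcur_MO w : dcurrent ends J A B w =
  (\prod_(e : E) kap (J e)) / (GC A * GC B) * MO ends t A B w.
Proof.
rewrite /dcurrent /munion.
transitivity ((GC A * GC B)^-1 * \sum_(w1 : {set E}) \sum_(w2 : {set E})
    ((w1 :|: w2 == w) : nat)%:R * HC A w1 * HC B w2).
  rewrite big_distrr /=; apply: eq_bigr => w1 _.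
  rewrite big_distrr /=; apply: eq_bigr => w2 _.
  by rewrite !currentE invfM; ring.
suff -> : \sum_(w1 : {set E}) \sum_(w2 : {set E}) ((w1 :|: w2 == w) : nat)%:R * HC A w1 * HC B w2 =
  (\prod_(e : E) kap (J e)) * MO ends t A B w by ring.
rewrite dcur_expand /MO /Seta big_distrr /=; apply: eq_bigr => u1 _.
rewrite mulrCA; congr (_ * _).
rewrite big_distrr /=; apply: eq_bigr => u2 _.
rewrite mulrCA; congr (_ * _).
under eq_bigr => w1 _ do rewrite (sumprod_sets (fun e b => Gd w u1 u2 e (e \in w1) b)).
rewrite (sumprod_sets (fun e b => Gd w u1 u2 e b true + Gd w u1 u2 e b false)).
rewrite -big_split /=; apply: eq_bigr => e _.
exact: dcur_edge.
Qed.

Lemma dcur_mass : \sum_(w : {set E}) dcurrent ends J A B w = 1.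
Proof.
by rewrite /dcurrent munion_mass !current_mass ?mulr1.
Qed.

Lemma F3 w : margO P w = dcurrent ends J A B w.
Proof.
apply: (@norm_eq _ _ (margO P) (dcurrent ends J A B) (MO ends t A B) Kc
   ((\prod_(e : E) kap (J e)) / (GC A * GC B))).
- by move=> i; rewrite margO_card -K3; ring.
- exact: dcur_MO.
- exact: sumO.
- exact: dcur_mass.
Qed.


Lemma margS_gt0 eta : eta \in Sigma ends A -> 0 < margS P eta.
Proof.
rewrite inE => /eqP hA; rewrite F1 loopOE; apply: mulr_gt0.
  by rewrite invr_gt0 ZL_gt0.
by rewrite /LL hA eqxx mul1r; apply: prodr_gt0 => e _; apply: ht0.
Qed.

Lemma F4 eta : eta \in Sigma ends A -> forall w,
  condS P eta w =
  munion (munion (loopO ends t B) Bern) (pdirac R eta) w.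
Proof.
move=> hS; have hm := margS_gt0 hS.
move: (hS); rewrite inE => /eqP hA.
apply: (@norm_eq _ _ (condS P eta) (munion (munion (loopO ends t B) Bern) (pdirac R eta))
   (Seta ends t B eta) (Kc / margS P eta)
   ((\prod_(e : E) (if e \in eta then (t e)^-1 else 1)) / ZL ends t B)).
- move=> w; rewrite /condS PE -(K2 t B w hA).
  have -> : (eta \in fsub ends A w) = (eta \subset w) by rewrite inE hA eqxx andbT.
  ring.
- by move=> w; rewrite K4 //; apply: ht0.
- rewrite /condS -big_distrl /= mulfV // gt_eqF //.
- rewrite !munion_mass loop_mass // bern_mass dirac_mass; ring.
Qed.

Lemma margO_unif w eta : margO P w * unif R (fsub ends A w) eta = P (w, eta).
Proof.
rewrite margO_card PE /unif.
case: (boolP (eta \in fsub ends A w)) => h; last by rewrite !mul0r !mulr0.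
have hc : (#|fsub ends A w|%:R : R) != 0.
  by rewrite pnatr_eq0 -lt0n; apply/card_gt0P; exists eta.
rewrite mulr1n; field; by [].
Qed.

Lemma F5 eta : \sum_(w : {set E}) dcurrent ends J A B w * unif R (fsub ends A w) eta =
  loopO ends t A eta.
Proof.
rewrite -F1 /margS; apply: eq_bigr => w _.
by rewrite -F3 margO_unif.
Qed.

End Main.
Unset Implicit Arguments.

Theorem proposition2p2 (R : realType) (V E : finType) (ends : E -> {set V})
  (ends2 : forall e, #|ends e| = 2%N) (ends_inj : injective ends)
  (J : E -> R) (Jpos : forall e, 0 < J e)
  (A B : {set V}) (Aeven : ~~ odd #|A|) (Beven : ~~ odd #|B|)
  (Asol : exists F : {set E}, bdry ends F = A)
  (Bsol : exists F : {set E}, bdry ends F = B) :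
  let t := fun e => tanh (J e) in
  let P := coupling ends t A B in
  (* (a) *)
  ((forall eta, margS P eta = loopO ends t A eta) /\
   (forall w, FA ends A w -> FA ends B w ->
      forall eta, condO P w eta = unif R (fsub ends A w) eta)) /\
  (* (b) *)
  ((forall w, margO P w = dcurrent ends J A B w) /\
   (forall eta, eta \in Sigma ends A -> forall w,
      condS P eta w =
      munion (munion (loopO ends t B) (bernoulli (fun e => t e ^+ 2))) (pdirac R eta) w)) /\
  (* in particular *)
  (forall eta,
     \sum_(w : {set E}) dcurrent ends J A B w * unif R (fsub ends A w) eta
     = loopO ends t A eta).
Proof.
move=> t P; rewrite /P /t.
split; first split.
- by move=> eta; apply: F1.
- by move=> w hA hB eta; apply: F2.
split; first split.
- by move=> w; apply: F3.
- by move=> eta hS w; apply: F4.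
- by move=> eta; apply: F5.
Qed.
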